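(* Let $\mathcal{B}$ be a complete topological ring and let $\mathrm{e}\colon\mathcal{B}\to\mathcal{B}\{T\}$ be a restricted exponential homomorphism. Let $S\subseteq\mathcal{B}^{\mathrm{e}}$ be a multiplicatively closed subset, let $\tilde j\colon\mathcal{B}\to\widehat{S^{-1}\mathcal{B}}$ be the separated completed localization homomorphism and let $\tilde j_T\colon\mathcal{B}\{T\}\to\widehat{S^{-1}\mathcal{B}}\{T\}$ be the induced homomorphism $\sum_ib_iT^i\mapsto\sum_i\tilde j(b_i)T^i$. Then there exists a unique restricted exponential homomorphism $\widehat{S^{-1}\mathrm{e}}\colon\widehat{S^{-1}\mathcal{B}}\to\widehat{S^{-1}\mathcal{B}}\{T\}$ such that $\tilde j_T\circ\mathrm{e}=\widehat{S^{-1}\mathrm{e}}\circ\tilde j$.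
   Context: Conventions: topological rings are linearly topologized with a countable fundamental system of open ideals; homomorphisms are continuous; complete means the canonical map to $\varprojlim_{\mathfrak{a}}\mathcal{B}/\mathfrak{a}$ (open ideals, discrete quotients) is a topological isomorphism. For complete $\mathcal{C}$, $\mathcal{C}\{T\}$, $\mathcal{C}\{T,T'\}$ denote restricted power series (coefficients converging to $0$), topologized by the ideals of series with all coefficients in a given open ideal. A restricted exponential homomorphism of a complete ring $\mathcal{C}$ is a continuous ring homomorphism $\mathrm{e}\colon\mathcal{C}\to\mathcal{C}\{T\}$, $\mathrm{e}(c)=\sum_i\mathrm{e}_i(c)T^i$, with $\mathrm{e}_0=\mathrm{id}$ and $\sum_{i,j}\mathrm{e}_j(\mathrm{e}_i(c))T'^jT^i=\sum_\ell\mathrm{e}_\ell(c)(T+T')^\ell$ for all $c$. $\mathcal{B}^{\mathrm{e}}=\{b:\mathrm{e}(b)=b\}$. A multiplicatively closed subset contains $1$ and is stable under multiplication. The separated completed localization $\widehat{S^{-1}\mathcal{B}}$ is the separated completion of $S^{-1}\mathcal{B}$ for the linear topology with fundamental system of ideals $S^{-1}\mathfrak{b}$, $\mathfrak{b}$ open in $\mathcal{B}$, and $\tilde j$ is the composite $\mathcal{B}\to S^{-1}\mathcal{B}\to\widehat{S^{-1}\mathcal{B}}$. *)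

(* Defs.v *)
From mathcomp Require Import all_boot all_algebra.
Set Implicit Arguments. Unset Strict Implicit. Unset Printing Implicit Defensive.
Import GRing.Theory.
Local Open Scope ring_scope.

(* A "raw" linearly topologized ring presented as a setoid:                 *)
(*   lt_dom   : the elements of the carrier that represent ring elements    *)
(*   lt_eqv   : equality of the represented ring                            *)
(*   lt_ideal n : the n-th member of a (decreasing) countable fundamental   *)
(*               system of open ideals; the open ideals are exactly the     *)
(*               ideals containing some lt_ideal n.                         *)
(* This generic presentation is used both for B (Leibniz equality) and for  *)
(* the separated completed localization (Cauchy sequences modulo null       *)
(* sequences), so that "restricted exponential homomorphism" is defined     *)
(* once and for all.                                                        *)
Record ltring := LTRing {
  lt_car : Type;
  lt_dom : lt_car -> Prop;
  lt_eqv : lt_car -> lt_car -> Prop;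
  lt_zero : lt_car;
  lt_one : lt_car;
  lt_add : lt_car -> lt_car -> lt_car;
  lt_opp : lt_car -> lt_car;
  lt_mul : lt_car -> lt_car -> lt_car;
  lt_ideal : nat -> lt_car -> Prop }.

Section Generic.
Variable R : ltring.
Local Notation C := (lt_car R).

Fixpoint lt_sum (n : nat) (f : nat -> C) : C :=
  match n with
  | 0%N => lt_zero R
  | n'.+1 => lt_add (lt_sum n' f) (f n')
  end.

Definition lt_natmul (k : nat) (x : C) : C := iter k (lt_add x) (lt_zero R).

(* A restricted exponential homomorphism E : R -> R{T},
   E x = sum_i (E x i) T^i, written out coefficientwise. *)
Definition is_rexp (E : C -> nat -> C) : Prop :=
  (forall x i, lt_dom x -> lt_dom (E x i)) /\
  (forall x y i, lt_dom x -> lt_dom y -> lt_eqv x y -> lt_eqv (E x i) (E y i)) /\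
  (* E x is a restricted power series: coefficients converge to 0 *)
  (forall x, lt_dom x -> forall n, exists N, forall i, (N <= i)%N -> lt_ideal n (E x i)) /\
  (forall x y i, lt_dom x -> lt_dom y ->
     lt_eqv (E (lt_add x y) i) (lt_add (E x i) (E y i))) /\
  (forall x y l, lt_dom x -> lt_dom y ->
     lt_eqv (E (lt_mul x y) l)
            (lt_sum l.+1 (fun i => lt_mul (E x i) (E y (l - i)%N)))) /\
  (forall l, lt_eqv (E (lt_one R) l) (if l == 0%N then lt_one R else lt_zero R)) /\
  (* continuity (R{T} topologized by the ideals I{T}) *)
  (forall n, exists m, forall x, lt_dom x -> lt_ideal m x ->
      forall i, lt_ideal n (E x i)) /\
  (forall x, lt_dom x -> lt_eqv (E x 0%N) x) /\
  (* sum_{i,j} e_j(e_i c) T'^j T^i = sum_l e_l(c) (T+T')^l, compared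
     coefficient of T^i T'^j (binomial expansion of (T+T')^(i+j)) *)
  (forall x i j, lt_dom x ->
     lt_eqv (E (E x i) j) (lt_natmul 'C(i + j, i) (E x (i + j)%N))).

(* elements b with e(b) = b (constant series) *)
Definition rexp_fixed (E : C -> nat -> C) (x : C) : Prop :=
  forall i, lt_eqv (E x i) (if i == 0%N then x else lt_zero R).

End Generic.

Section OnB.
Variable B : comPzRingType.
Variable I : nat -> B -> Prop.

Definition is_ideal (J : B -> Prop) : Prop :=
  J 0 /\ (forall x y, J x -> J y -> J (x + y)) /\ (forall a x, J x -> J (a * x)).

Definition fund_system : Prop :=
  (forall n, is_ideal (I n)) /\ (forall n x, I n.+1 x -> I n x).

(* completeness: B -> lim_n B/I_n is bijective (then automatically a
   topological isomorphism) *)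
Definition complete_ring : Prop :=
  (forall x : B, (forall n, I n x) -> x = 0) /\
  (forall x : nat -> B, (forall n, I n (x n.+1 - x n)) ->
     exists b, forall n, I n (b - x n)).

Definition ltB : ltring :=
  @LTRing B (fun _ => True) (@eq B) 0 1 +%R -%R *%R I.

Definition mult_closed (S : B -> Prop) : Prop :=
  S 1 /\ (forall s t, S s -> S t -> S (s * t)).

Variable S : B -> Prop.

(* fractions a/s are pairs (a, s) with s in S *)
Definition frac_sub (u v : B * B) : B * B :=
  (u.1 * v.2 - v.1 * u.2, u.2 * v.2).
Definition frac_add (u v : B * B) : B * B :=
  (u.1 * v.2 + v.1 * u.2, u.2 * v.2).
Definition frac_mul (u v : B * B) : B * B := (u.1 * v.1, u.2 * v.2).
Definition frac_opp (u : B * B) : B * B := (- u.1, u.2).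

(* a/s lies in S^{-1} I_n *)
Definition in_SI (n : nat) (u : B * B) : Prop := exists t, S t /\ I n (t * u.1).

(* elements of the completion: Cauchy sequences in S^{-1}B for the
   topology defined by the ideals S^{-1} I_n ... *)
Definition loc_valid (u : nat -> B * B) : Prop :=
  (forall k, S (u k).2) /\
  (forall n, exists N, forall k k', (N <= k)%N -> (N <= k')%N ->
      in_SI n (frac_sub (u k) (u k'))).

(* ... modulo null sequences (this also quotients by the equality of
   S^{-1}B and makes the result separated) *)
Definition loc_eqv (u v : nat -> B * B) : Prop :=
  forall n, exists N, forall k, (N <= k)%N -> in_SI n (frac_sub (u k) (v k)).

(* open ideals of the completion: kernels of (S^{-1}B)^ -> S^{-1}B/S^{-1}I_n *)
Definition loc_ideal (n : nat) (u : nat -> B * B) : Prop :=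
  exists N, forall k, (N <= k)%N -> in_SI n (u k).

Definition ltLoc : ltring :=
  @LTRing (nat -> B * B) loc_valid loc_eqv
    (fun _ => (0, 1)) (fun _ => (1, 1))
    (fun u v k => frac_add (u k) (v k))
    (fun u k => frac_opp (u k))
    (fun u v k => frac_mul (u k) (v k))
    loc_ideal.

Definition jloc (b : B) : nat -> B * B := fun _ => (b, 1).

End OnB.

(* Main.v *)
Require Import Defs.
From mathcomp Require Import all_boot all_algebra.
From mathcomp Require Import ring.
Set Implicit Arguments. Unset Strict Implicit. Unset Printing Implicit Defensive.
Import GRing.Theory.
Local Open Scope ring_scope.

Section Loc.
Variable B : comPzRingType.
Variable J : nat -> B -> Prop.
Variable S : B -> Prop.
Hypothesis hJ : fund_system J.
Hypothesis hS : mult_closed S.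

Definition P n (a : B) := exists t, S t /\ J n (t * a).

Lemma J0 n : J n 0. Proof. by case: hJ => h _; case: (h n). Qed.
Lemma JD n a b : J n a -> J n b -> J n (a + b).
Proof. by case: hJ => h _; case: (h n) => _ [H _]; apply: H. Qed.
Lemma JM n x a : J n a -> J n (x * a).
Proof. by case: hJ => h _; case: (h n) => _ [_ H]; apply: H. Qed.
Lemma Jmono n m a : (n <= m)%N -> J m a -> J n a.
Proof.
move=> /subnK <-; elim: (m - n)%N => [|j IH] //= h.
apply: IH; by case: hJ => _ H; apply: H; rewrite addSn in h.
Qed.

Lemma S1 : S 1. Proof. by case: hS. Qed.
Lemma SM s t : S s -> S t -> S (s * t). Proof. by case: hS => _ H; apply: H. Qed.

Lemma P0 n : P n 0. Proof. by exists 1; split; [exact: S1| rewrite mulr0; exact: J0]. Qed.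
Lemma PD n a b : P n a -> P n b -> P n (a + b).
Proof.
move=> [t1 [s1 h1]] [t2 [s2 h2]]; exists (t1 * t2); split; first exact: SM.
have -> : t1 * t2 * (a + b) = t2 * (t1 * a) + t1 * (t2 * b) by ring.
by apply: JD; apply: JM.
Qed.
Lemma PM n x a : P n a -> P n (x * a).
Proof.
move=> [t [s h]]; exists t; split => //.
have -> : t * (x * a) = x * (t * a) by ring.
exact: JM.
Qed.
Lemma PMr n x a : P n a -> P n (a * x).
Proof. by rewrite mulrC; apply: PM. Qed.
Lemma PN n a : P n a -> P n (- a).
Proof. by move=> h; rewrite -mulN1r; apply: PM. Qed.
Lemma PB n a b : P n a -> P n b -> P n (a - b).
Proof. by move=> ha hb; apply: PD => //; apply: PN. Qed.
Lemma Pcancel n s a : S s -> P n (s * a) -> P n a.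
Proof.
move=> hs [t [st h]]; exists (t * s); split; first exact: SM.
by rewrite -mulrA.
Qed.
Lemma Pmono n m a : (n <= m)%N -> P m a -> P n a.
Proof. by move=> nm [t [st h]]; exists t; split => //; apply: Jmono h. Qed.
Lemma PJ n a : J n a -> P n a.
Proof. by move=> h; exists 1; rewrite mul1r; split => //; exact: S1. Qed.
Lemma Peq n a b : a = b -> P n a -> P n b. Proof. by move->. Qed.

Definition Rl n (p q : B * B) := P n (p.1 * q.2 - q.1 * p.2).

Lemma Rl_eq n p q : p.1 * q.2 = q.1 * p.2 -> Rl n p q.
Proof. by move=> h; rewrite /Rl h subrr; apply: P0. Qed.
Lemma Rl_refl n p : Rl n p p. Proof. by apply: Rl_eq. Qed.
Lemma Rl_sym n p q : Rl n p q -> Rl n q p.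
Proof. by move=> h; apply: (Peq _ (PN h)); ring. Qed.
Lemma Rl_trans n p q r : S q.2 -> Rl n p q -> Rl n q r -> Rl n p r.
Proof.
move=> hq h1 h2; apply: (Pcancel hq).
apply: (Peq _ (PD (PM r.2 h1) (PM p.2 h2))); rewrite /=; ring.
Qed.
Lemma Rl_add n p p' q q' : Rl n p p' -> Rl n q q' ->
  Rl n (frac_add p q) (frac_add p' q').
Proof.
move=> h1 h2; apply: (Peq _ (PD (PM (q.2 * q'.2) h1) (PM (p.2 * p'.2) h2))).
rewrite /frac_add /=; ring.
Qed.
Lemma Rl_mul n p p' q q' : Rl n p p' -> Rl n q q' ->
  Rl n (frac_mul p q) (frac_mul p' q').
Proof.
move=> h1 h2; apply: (Peq _ (PD (PM (q.1 * q'.2) h1) (PM (p'.1 * p.2) h2))).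
rewrite /frac_mul /=; ring.
Qed.
Lemma Rl_opp n p q : Rl n p q -> Rl n (frac_opp p) (frac_opp q).
Proof. by move=> h; apply: (Peq _ (PN h)); rewrite /frac_opp /=; ring. Qed.

Definition dens (u : nat -> B * B) := forall k, S (u k).2.

Lemma leqv_pw u v : (forall n k, Rl n (u k) (v k)) -> loc_eqv J S u v.
Proof. by move=> h n; exists 0%N => k _; apply: h. Qed.

Lemma leqv_sym u v : loc_eqv J S u v -> loc_eqv J S v u.
Proof. by move=> h n; case: (h n) => N hN; exists N => k /hN; apply: Rl_sym. Qed.

Lemma leqv_trans u v w : dens v -> loc_eqv J S u v -> loc_eqv J S v w ->
  loc_eqv J S u w.
Proof.
move=> hv h1 h2 n; case: (h1 n) => N1 H1; case: (h2 n) => N2 H2.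
exists (maxn N1 N2) => k; rewrite geq_max => /andP[k1 k2].
exact: (Rl_trans (hv k) (H1 k k1) (H2 k k2)).
Qed.

Lemma leqv_add u u' v v' : loc_eqv J S u u' -> loc_eqv J S v v' ->
  loc_eqv J S (fun k => frac_add (u k) (v k)) (fun k => frac_add (u' k) (v' k)).
Proof.
move=> h1 h2 n; case: (h1 n) => N1 H1; case: (h2 n) => N2 H2.
exists (maxn N1 N2) => k; rewrite geq_max => /andP[k1 k2].
exact: (Rl_add (H1 k k1) (H2 k k2)).
Qed.

Lemma leqv_mul u u' v v' : loc_eqv J S u u' -> loc_eqv J S v v' ->
  loc_eqv J S (fun k => frac_mul (u k) (v k)) (fun k => frac_mul (u' k) (v' k)).
Proof.
move=> h1 h2 n; case: (h1 n) => N1 H1; case: (h2 n) => N2 H2.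
exists (maxn N1 N2) => k; rewrite geq_max => /andP[k1 k2].
exact: (Rl_mul (H1 k k1) (H2 k k2)).
Qed.

Lemma valid_add u v : loc_valid J S u -> loc_valid J S v ->
  loc_valid J S (fun k => frac_add (u k) (v k)).
Proof.
move=> [du cu] [dv cv]; split; first by move=> k; apply: SM.
move=> n; case: (cu n) => N1 H1; case: (cv n) => N2 H2.
exists (maxn N1 N2) => k k'; rewrite !geq_max => /andP[k1 k2] /andP[k1' k2'].
exact: (Rl_add (H1 k k' k1 k1') (H2 k k' k2 k2')).
Qed.

Lemma valid_opp u : loc_valid J S u -> loc_valid J S (fun k => frac_opp (u k)).
Proof.
move=> [du cu]; split; first by move=> k; apply: du.
move=> n; case: (cu n) => N1 H1; exists N1 => k k' k1 k1'.
exact: (Rl_opp (H1 k k' k1 k1')).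
Qed.

Lemma valid_const p : S p.2 -> loc_valid J S (fun _ => p).
Proof. by move=> h; split => // n; exists 0%N => k k' _ _; apply: Rl_refl. Qed.


Variable e : B -> nat -> B.
Hypothesis he : @is_rexp (ltB J) e.
Hypothesis hfix : forall s, S s -> @rexp_fixed (ltB J) e s.

Lemma e_add x y i : e (x + y) i = e x i + e y i.
Proof. by case: he => _ [_ [_ [H _]]]; apply: H. Qed.
Lemma e_mulB x y l :
  e (x * y) l = @lt_sum (ltB J) l.+1 (fun i => e x i * e y (l - i)%N).
Proof. by case: he => _ [_ [_ [_ [H _]]]]; apply: H. Qed.
Lemma e_one l : e 1 l = if l == 0%N then 1 else 0.
Proof. by case: he => _ [_ [_ [_ [_ [H _]]]]]; apply: H. Qed.
Lemma e_cont n : exists m, forall x, J m x -> forall i, J n (e x i).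
Proof. by case: he => _ [_ [_ [_ [_ [_ [H _]]]]]]; case: (H n) => m Hm; exists m => x; apply: Hm. Qed.
Lemma e_res x n : exists N, forall i, (N <= i)%N -> J n (e x i).
Proof. by case: he => _ [_ [H _]]; apply: H. Qed.
Lemma e_id x : e x 0 = x.
Proof. by case: he => _ [_ [_ [_ [_ [_ [_ [H _]]]]]]]; apply: H. Qed.
Lemma e_bin x i j : e (e x i) j = @lt_natmul (ltB J) 'C(i + j, i) (e x (i + j)).
Proof. by case: he => _ [_ [_ [_ [_ [_ [_ [_ H]]]]]]]; apply: H. Qed.
Lemma e_fix s i : S s -> e s i = if i == 0%N then s else 0.
Proof. by move=> /hfix; apply. Qed.

Lemma e0 i : e 0 i = 0.
Proof.
have h := e_add 0 0 i; rewrite addr0 in h.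
by apply: (@addrI _ (e 0 i)); rewrite addr0 -h.
Qed.
Lemma eN x i : e (- x) i = - e x i.
Proof. by apply/eqP; rewrite -addr_eq0 -e_add addNr e0. Qed.
Lemma eB x y i : e (x - y) i = e x i - e y i.
Proof. by rewrite e_add eN. Qed.

Lemma e_mulS x s l : S s -> e (x * s) l = e x l * s.
Proof.
move=> hs; rewrite e_mulB.
have H : forall n, (n <= l)%N ->
  @lt_sum (ltB J) n (fun i => e x i * e s (l - i)%N) = 0.
  elim=> [|n IH] nl //=; rewrite IH ?(ltnW nl) // (e_fix (l - n)%N hs).
  by rewrite subn_eq0 leqNgt nl /= mulr0 addr0.
by rewrite /= H // (e_fix (l - l)%N hs) subnn /= add0r.
Qed.
Lemma e_Smul x s l : S s -> e (s * x) l = s * e x l.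
Proof. by move=> hs; rewrite mulrC e_mulS // mulrC. Qed.

Lemma P_e n : exists m, forall y i, P m y -> P n (e y i).
Proof.
case: (e_cont n) => m Hm; exists m => y i [t [st h]]; exists t; split => //.
by rewrite -e_Smul //; apply: Hm.
Qed.

Lemma natmulB c y : @lt_natmul (ltB J) c y = y *+ c.
Proof. by elim: c => [|c IH] //=; rewrite IH mulrS. Qed.

Lemma sum_common (F : nat -> nat -> B * B) k d n :
  (forall j, (F j k).2 = d) ->
  ((@lt_sum (ltLoc J S) n F) k).2 = d ^+ n /\
  ((@lt_sum (ltLoc J S) n F) k).1 * d = @lt_sum (ltB J) n (fun j => (F j k).1) * d ^+ n.
Proof.
move=> hF; elim: n => [|n [IH2 IH1]] /=; first by rewrite mul0r mul0r.
rewrite /frac_add /= IH2 hF exprSr; split => //.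
rewrite mulrDl IH1; ring.
Qed.

Lemma natmul_common (u : nat -> B * B) k c :
  ((@lt_natmul (ltLoc J S) c u) k).2 = (u k).2 ^+ c /\
  ((@lt_natmul (ltLoc J S) c u) k).1 * (u k).2 = ((u k).1 *+ c) * (u k).2 ^+ c.
Proof.
elim: c => [|c [IH2 IH1]] /=; first by rewrite mul0r mulr0n mul0r.
rewrite /lt_natmul /= in IH1 IH2 *.
rewrite /frac_add /= IH2 exprS; split => //.
rewrite mulrDl mulrAC IH1 mulrS; ring.
Qed.

Definition Eloc (u : nat -> B * B) (i : nat) : nat -> B * B :=
  fun k => (e (u k).1 i, (u k).2).

Lemma Rl_E n : exists m, forall p q i, S p.2 -> S q.2 -> Rl m p q ->
  Rl n (e p.1 i, p.2) (e q.1 i, q.2).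
Proof.
case: (P_e n) => m Hm; exists m => p q i hp hq h.
have := Hm _ i h; rewrite /Rl /= eB !e_mulS //.
Qed.

Lemma Eloc_rexp : @is_rexp (ltLoc J S) Eloc.
Proof.
split.
  move=> x i [dx cx]; split; first exact: dx.
  move=> n; case: (Rl_E n) => m Hm; case: (cx m) => N HN.
  by exists N => k k' hk hk'; apply: Hm; [apply: dx|apply: dx|apply: HN].
split.
  move=> x y i [dx _] [dy _] h n; case: (Rl_E n) => m Hm; case: (h m) => N HN.
  by exists N => k hk; apply: Hm; [apply: dx|apply: dy|apply: HN].
split.
  move=> x [dx cx] n; case: (P_e n) => m Hm; case: (cx m) => K HK.
  case: (e_res (x K).1 n) => N HN; exists N => i hi; exists K => k hk.
  have h1 : P n (e (x k).1 i * (x K).2 - e (x K).1 i * (x k).2).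
    have := Hm _ i (HK k K hk (leqnn K)); by rewrite eB !e_mulS.
  apply: (Pcancel (dx K)); rewrite mulrC.
  apply: (Peq _ (PD h1 (PM (x k).2 (PJ (HN i hi))))); rewrite /Eloc /=; ring.
split.
  move=> x y i [dx _] [dy _]; apply: leqv_pw => n k; apply: Rl_eq => /=.
  by rewrite e_add !e_mulS.
split.
  move=> x y l [dx _] [dy _]; apply: leqv_pw => n k; apply: Rl_eq.
  pose F := fun i => @lt_mul (ltLoc J S) (Eloc x i) (Eloc y (l - i)%N).
  have [h2 h1] := @sum_common F k ((x k).2 * (y k).2) l.+1 (fun j => erefl).
  rewrite /= in h1 h2 *; rewrite h2 h1 e_mulB //.
split.
  move=> l; apply: leqv_pw => n k; rewrite /Eloc /= e_one.
  by case: l => [|l] /=; apply: Rl_refl.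
split.
  move=> n; case: (P_e n) => m Hm; exists m => x _ [N HN] i.
  by exists N => k hk; apply: Hm; apply: HN.
split.
  move=> x _; apply: leqv_pw => n k; rewrite /Eloc e_id; apply: Rl_refl.
move=> x i j _; apply: leqv_pw => n k; apply: Rl_eq.
have [h2 h1] := natmul_common (Eloc x (i + j)) k 'C(i + j, i).
rewrite /= in h1 h2 *; rewrite h2 h1 e_bin natmulB //.
Qed.

Lemma leqv_refl u : loc_eqv J S u u.
Proof. by apply: leqv_pw => n k; apply: Rl_refl. Qed.

Lemma dens_sum n (G : nat -> nat -> B * B) : (forall j, dens (G j)) ->
  dens (@lt_sum (ltLoc J S) n G).
Proof.
move=> hG; elim: n => [|n IH] k /=; first exact: S1.
by apply: SM; [apply: IH|apply: hG].
Qed.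

Lemma Eloc_j b i : loc_eqv J S (jloc (e b i)) (Eloc (jloc b) i).
Proof. exact: leqv_refl. Qed.

Section Uniq.
Variable E' : (nat -> B * B) -> nat -> (nat -> B * B).
Hypothesis hE : @is_rexp (ltLoc J S) E'.
Hypothesis hEj : forall b i, loc_eqv J S (jloc (e b i)) (E' (jloc b) i).

Let zc : nat -> B * B := fun _ => (0, 1).

Lemma Edom x i : loc_valid J S x -> loc_valid J S (E' x i).
Proof. by case: hE => H _; apply: H. Qed.
Lemma Edens x i : loc_valid J S x -> dens (E' x i).
Proof. by move=> /(Edom i) []. Qed.
Lemma Ewd x y i : loc_valid J S x -> loc_valid J S y -> loc_eqv J S x y ->
  loc_eqv J S (E' x i) (E' y i).
Proof. by case: hE => _ [H _]; apply: H. Qed.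
Lemma Eadd x y i : loc_valid J S x -> loc_valid J S y ->
  loc_eqv J S (E' (fun k => frac_add (x k) (y k)) i)
              (fun k => frac_add (E' x i k) (E' y i k)).
Proof. by case: hE => _ [_ [_ [H _]]]; apply: H. Qed.
Lemma Emul x y l : loc_valid J S x -> loc_valid J S y ->
  loc_eqv J S (E' (fun k => frac_mul (x k) (y k)) l)
    (@lt_sum (ltLoc J S) l.+1
       (fun i k => frac_mul (E' x i k) (E' y (l - i)%N k))).
Proof. by case: hE => _ [_ [_ [_ [H _]]]]; apply: H. Qed.
Lemma Econt n : exists m, forall x, loc_valid J S x -> loc_ideal J S m x ->
  forall i, loc_ideal J S n (E' x i).
Proof. by case: hE => _ [_ [_ [_ [_ [_ [H _]]]]]]; apply: H. Qed.

Lemma validj b : loc_valid J S (jloc b).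
Proof. by apply: valid_const; exact: S1. Qed.

Lemma claimA p i : S p.2 ->
  loc_eqv J S (E' (fun _ => p) i) (fun _ => (e p.1 i, p.2)).
Proof.
move=> hp; set c := fun _ : nat => p.
have vc : loc_valid J S c by apply: valid_const.
set s := p.2.
have vcs : loc_valid J S (fun k => frac_mul (c k) (jloc s k)).
  by apply: (valid_const (p := frac_mul p (s, 1))) => /=; rewrite mulr1.
pose G := fun j k => frac_mul (E' c j k) (E' (jloc s) (i - j)%N k).
have dG : forall j, dens (G j).
  by move=> j k; apply: SM; apply: Edens => //; apply: validj.
have G0 : forall j, (j < i)%N -> loc_eqv J S (G j) zc.
  move=> j ji; apply: (@leqv_trans _ (fun k => frac_mul (E' c j k) (jloc 0 k))).
  - by move=> k /=; rewrite mulr1; apply: Edens.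
  - apply: leqv_mul; first exact: leqv_refl.
    apply: leqv_sym; have := hEj s (i - j)%N.
    by rewrite (e_fix _ hp) subn_eq0 leqNgt ji.
  - by apply: leqv_pw => n k; apply: Rl_eq => /=; ring.
have Hz : forall n, (n <= i)%N -> loc_eqv J S (@lt_sum (ltLoc J S) n G) zc.
  elim=> [|n IH] ni; first exact: leqv_refl.
  apply: (@leqv_trans _ (fun k => frac_add (zc k) (zc k))).
  - by move=> k /=; rewrite mulr1; exact: S1.
  - by apply: leqv_add; [apply: IH; apply: ltnW|apply: G0].
  - by apply: leqv_pw => n0 k; apply: Rl_eq => /=; ring.
pose M := fun k => frac_add (zc k) (frac_mul (E' c i k) (jloc s k)).
have HM : loc_eqv J S (@lt_sum (ltLoc J S) i.+1 G) M.
  apply: leqv_add; first exact: Hz.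
  apply: leqv_mul; first exact: leqv_refl.
  by apply: leqv_sym; have := hEj s 0%N; rewrite subnn (e_fix _ hp).
have hm : loc_eqv J S (jloc p.1) (fun k => frac_mul (c k) (jloc s k)).
  by apply: leqv_pw => n k; apply: Rl_eq => /=; rewrite /s; ring.
have H : loc_eqv J S (jloc (e p.1 i)) M.
  apply: (leqv_trans (Edens _ (validj _)) (hEj _ _)).
  apply: (leqv_trans (Edens _ vcs) (Ewd i (validj _) vcs hm)).
  apply: (leqv_trans (dens_sum _ dG) (Emul _ vc (validj _))).
  exact: HM.
move=> n; case: (H n) => N HN; exists N => k /HN h.
apply: Rl_sym; apply: (Peq _ h); rewrite /M /zc /= /s; ring.
Qed.

Lemma uniq x i : loc_valid J S x -> loc_eqv J S (Eloc x i) (E' x i).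
Proof.
move=> vx; have [dx cx] := vx; move=> n.
case: (Econt n) => m Hm; case: (P_e n) => m2 Hm2; case: (cx (m + m2)%N) => K HK.
set c := fun _ : nat => x K.
have vc : loc_valid J S c by apply: valid_const.
pose d := fun k => frac_add (x k) (frac_opp (c k)).
have vd : loc_valid J S d by apply: valid_add => //; apply: valid_opp.
have hd : loc_ideal J S m d.
  exists K => k hk; have := Pmono (leq_addr m2 m) (HK k K hk (leqnn K)).
  by apply: Peq; rewrite /d /c /=; ring.
case: (Hm d vd hd i) => N1 HN1.
have hxcd : loc_eqv J S x (fun k => frac_add (c k) (d k)).
  by apply: leqv_pw => n0 k; apply: Rl_eq; rewrite /d /c /=; ring.
have vcd : loc_valid J S (fun k => frac_add (c k) (d k)) by apply: valid_add.
pose Z := fun k => frac_add (e (x K).1 i, (x K).2) (E' d i k).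
have h123 : loc_eqv J S (E' x i) Z.
  apply: (leqv_trans (Edens _ vcd) (Ewd i vx vcd hxcd)).
  apply: (@leqv_trans _ (fun k => frac_add (E' c i k) (E' d i k))).
  - by move=> k; apply: SM; apply: Edens.
  - exact: Eadd.
  - apply: leqv_add; last exact: leqv_refl.
    exact: (claimA i (dx K)).
case: (h123 n) => N2 HN2.
exists (maxn K (maxn N1 N2)) => k; rewrite !geq_max => /and3P[k1 k2 k3].
apply: (Rl_trans (q := Z k)).
  by rewrite /Z /=; apply: SM; [apply: dx|apply: Edens].
  have h := Hm2 _ i (Pmono (leq_addl m m2) (HK k K k1 (leqnn K))).
  rewrite eB !e_mulS // in h.
  apply: (Peq _ (PD (PM (E' d i k).2 h) (PM (- ((x K).2 * (x k).2)) (HN1 k k2)))).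
  by rewrite /Z /Eloc /=; ring.
by apply: Rl_sym; apply: HN2.
Qed.
End Uniq.
End Loc.

Theorem proposition2p6 (B : comPzRingType) (I : nat -> B -> Prop)
  (e : B -> nat -> B) (S : B -> Prop) :
  fund_system I -> complete_ring I ->
  @is_rexp (ltB I) e ->
  mult_closed S -> (forall s, S s -> @rexp_fixed (ltB I) e s) ->
  exists E : (nat -> B * B) -> nat -> (nat -> B * B),
    (@is_rexp (ltLoc I S) E /\
     (forall b i, loc_eqv I S (jloc (e b i)) (E (jloc b) i))) /\
    (forall E' : (nat -> B * B) -> nat -> (nat -> B * B),
       @is_rexp (ltLoc I S) E' ->
       (forall b i, loc_eqv I S (jloc (e b i)) (E' (jloc b) i)) ->
       forall x, loc_valid I S x -> forall i, loc_eqv I S (E x i) (E' x i)).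
Proof.
move=> hJ _ he hS hfix; exists (Eloc e).
split; first by split; [exact: Eloc_rexp | move=> b i; exact: Eloc_j].
move=> E' hE hEj x vx i; exact: (uniq hJ hS he hfix hE hEj i vx).
Qed.
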